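(* Let $\mathcal E$ satisfy Assumption (i)–(v). For $x\in\mathbb R^d$ and $r\in(0,R_0]$ define $\mathcal E_r(x)=\sup_{y\in B_r(\bar y(x))}|\mathcal E(x,y)-\mathcal E(x,\bar y(x))|$. Let $0<q\le \mathcal E_\infty/2$ and $r:=\max\{s\in(0,R_0]:\sup_{x\in\mathbb R^d}\mathcal E_s(x)\le q\}$. Let $(\overline X_t,\overline Y_t)$ solve (MF) and $\rho_t^Y$ be the law of $\overline Y_t$. Then for every $t>0$ and every $x\in\mathbb R^d$ with $\rho_t^Y(B_r(\bar y(x)))>0$, $$|\bar y(x)-Y_\beta(\rho^Y_t,x)|\le\frac{(2q)^\nu}{\eta}+\frac{\exp(-\beta q)}{\rho_t^Y(B_r(\bar y(x)))}\int|y-\bar y(x)|\,\rho^Y_t(dy).$$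
   Context: Let $\mathcal{E}:\mathbb R^d\times\mathbb R^d\to\mathbb R$ be continuous, $|\cdot|$ the Euclidean norm, and $B_r(z)=\{z':\max_k|z'_k-z_k|\le r\}$ the $\ell^\infty$ ball. Weights $\omega^{\mathcal E}_\alpha(x,y)=\exp(-\alpha\mathcal E(x,y))$. For a probability measure $\rho^Y$, $Y_\beta(\rho^Y,x)=\int y\,e^{\beta\mathcal E(x,y)}\rho^Y(dy)/\int e^{\beta\mathcal E(x,y)}\rho^Y(dy)$, and $X_{\alpha,\beta}(\rho^X)=\int x\,e^{-\alpha\mathcal E(x,Y_\beta(\rho^Y,x))}\rho^X(dx)/\int e^{-\alpha\mathcal E(x,Y_\beta(\rho^Y,x))}\rho^X(dx)$. Mean-field system (MF): with $\lambda,\sigma,\alpha,\beta>0$, $D(z)=\mathrm{diag}(z_1,\dots,z_d)$, independent Brownian motions $B^X,B^Y$: $d\overline X_t=-\lambda(\overline X_t-X_{\alpha,\beta}(\rho^X_t))dt+\sigma D(\overline X_t-X_{\alpha,\beta}(\rho^X_t))dB^X_t$, $d\overline Y_t=-\lambda(\overline Y_t-Y_\beta(\rho^Y_t,\overline X_t))dt+\sigma D(\overline Y_t-Y_\beta(\rho^Y_t,\overline X_t))dB^Y_t$, $\rho^X_t,\rho^Y_t$ the laws of $\overline X_t,\overline Y_t$; a solution with finite fourth moments on bounded time intervals is assumed to exist. Assumption: (i) $\underline C_{\mathcal E}\le\mathcal E\le\overline C_{\mathcal E}$. (ii) $|\mathcal E(x_1,y_1)-\mathcal E(x_2,y_2)|\le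 L_{\mathcal E}(1+|x_1|+|x_2|+|y_1|+|y_2|)(|x_1-x_2|+|y_1-y_2|)$. (iii) for each $x$ there is a unique $\bar y(x)=\arg\max_y\mathcal E(x,y)$; with $\overline{\mathcal E}(x)=\mathcal E(x,\bar y(x))$, $x^*=\arg\min\overline{\mathcal E}$ and $y^*=\bar y(x^* )$; $|\bar y(x_1)-\bar y(x_2)|\le\bar c_1|x_1-x_2|$ and $|\bar y(x)|\le\bar c_2$ for all $x$. (iv) there are $\mathcal E_\infty,\eta,\nu,R_0>0$ such that for all $x$: $\eta|y-\bar y(x)|\le|\mathcal E(x,y)-\mathcal E(x,\bar y(x))|^\nu$ for $y\in B_{R_0}(\bar y(x))$, and $\mathcal E_\infty<\mathcal E(x,\bar y(x))-\mathcal E(x,y)$ for $y\notin B_{R_0}(\bar y(x))$. (v) for each $q>0$ there is $r\in(0,R_0]$ with $\sup_x\sup_{y\in B_r(\bar y(x))}|\mathcal E(x,y)-\mathcal E(x,\bar y(x))|\le q$. *)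

(* Defs.v *)
From HB Require Import structures.
From mathcomp Require Import all_boot all_order all_algebra.
From mathcomp Require Import all_classical all_reals all_analysis.
Set Implicit Arguments. Unset Strict Implicit. Unset Printing Implicit Defensive.
Import Order.TTheory GRing.Theory Num.Theory.
Import numFieldNormedType.Exports.
Local Open Scope classical_set_scope.
Local Open Scope ring_scope.

Definition Rd (R : realType) (d : nat) :=
  g_sigma_algebraType (@open 'rV[R]_d).

Definition enorm {R : realType} {d : nat} (z : 'rV[R]_d) : R :=
  Num.sqrt (\sum_(k < d) (z ord0 k) ^+ 2).

Definition linf_ball {R : realType} {d : nat} (z : 'rV[R]_d) (r : R)
  : set 'rV[R]_d :=
  [set z' | forall k : 'I_d, `|z' ord0 k - z ord0 k| <= r].

Definition Ybeta {R : realType} {d : nat}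
  (E : 'rV[R]_d -> 'rV[R]_d -> R) (beta : R)
  (rho : probability (Rd R d) R) (x : 'rV[R]_d) : 'rV[R]_d :=
  \row_(k < d)
    (Rintegral rho setT (fun y : Rd R d => y ord0 k * expR (beta * E x y))
     / Rintegral rho setT (fun y : Rd R d => expR (beta * E x y))).

Definition Er {R : realType} {d : nat}
  (E : 'rV[R]_d -> 'rV[R]_d -> R) (ybar : 'rV[R]_d -> 'rV[R]_d)
  (r : R) (x : 'rV[R]_d) : R :=
  sup [set `|E x y - E x (ybar x)| | y in linf_ball (ybar x) r].

Definition supEr {R : realType} {d : nat}
  (E : 'rV[R]_d -> 'rV[R]_d -> R) (ybar : 'rV[R]_d -> 'rV[R]_d) (r : R) : R :=
  sup (range (Er E ybar r)).

(* Main.v *)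
Require Import Defs.
From HB Require Import structures.
From mathcomp Require Import all_boot all_order all_algebra.
From mathcomp Require Import all_classical all_reals all_analysis.
From mathcomp Require Import ring lra measurable_realfun.
Import Order.TTheory GRing.Theory Num.Theory.
Import numFieldNormedType.Exports.
Local Open Scope classical_set_scope.
Local Open Scope ring_scope.

Section H.
Variables (R : realType) (d : nat).
Implicit Types a b : 'rV[R]_d.

Lemma sumsq_ge0 a : 0 <= \sum_(k < d) (a ord0 k) ^+ 2.
Proof. by apply: sumr_ge0 => k _; exact: sqr_ge0. Qed.

Lemma enorm_ge0 a : 0 <= enorm a.
Proof. exact: sqrtr_ge0. Qed.

Lemma enorm_sq a : enorm a ^+ 2 = \sum_(k < d) (a ord0 k) ^+ 2.
Proof. by rewrite /enorm sqr_sqrtr // sumsq_ge0. Qed.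

Lemma coord_le_enorm a k : `|a ord0 k| <= enorm a.
Proof.
rewrite -(sqrtr_sqr (a ord0 k)) /enorm ler_sqrt ?sumsq_ge0 //.
rewrite (bigD1 k) //= lerDl; apply: sumr_ge0 => i _; exact: sqr_ge0.
Qed.

Lemma CS a b : `|\sum_(k < d) a ord0 k * b ord0 k| <= enorm a * enorm b.
Proof.
set A := \sum_(k < d) (a ord0 k) ^+ 2.
set Bs := \sum_(k < d) (b ord0 k) ^+ 2.
set C := \sum_(k < d) a ord0 k * b ord0 k.
have A0 : 0 <= A by exact: sumsq_ge0.
have B0 : 0 <= Bs by exact: sumsq_ge0.
suff h : C ^+ 2 <= A * Bs.
  by rewrite /enorm -sqrtrM // -(sqrtr_sqr C) ler_sqrt // mulr_ge0.
have [A0'|Apos] := eqVneq A 0.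
  have ak : forall k, a ord0 k = 0.
    move=> k; apply/eqP; rewrite -sqrf_eq0; apply/eqP.
    by apply: (psumr_eq0P _ A0') => // i _; exact: sqr_ge0.
  rewrite /C big1 ?expr0n ?A0' ?mul0r //= => k _; by rewrite ak mul0r.
have Ap : 0 < A by rewrite lt_def Apos A0.
have key : 0 <= \sum_(k < d) (A * b ord0 k - C * a ord0 k) ^+ 2.
  by apply: sumr_ge0 => i _; exact: sqr_ge0.
have eq : \sum_(k < d) (A * b ord0 k - C * a ord0 k) ^+ 2 = A * (A * Bs - C ^+ 2).
  transitivity (\sum_(k < d) ((A ^+ 2 * (b ord0 k) ^+ 2 + C ^+ 2 * (a ord0 k) ^+ 2)
     - (2 * A * C) * (a ord0 k * b ord0 k))).
    by apply: eq_bigr => k _; ring.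
  rewrite sumrB big_split /= -!mulr_sumr -/A -/Bs -/C; ring.
have : 0 <= A * (A * Bs - C ^+ 2) by rewrite -eq.
rewrite pmulr_rge0 // subr_ge0.
by [].
Qed.
End H.
Arguments sumsq_ge0 {R d}. Arguments enorm_ge0 {R d}. Arguments enorm_sq {R d}.
Arguments coord_le_enorm {R d}. Arguments CS {R d}.

Section M.
Variables (R : realType) (d : nat).

Lemma meas_cont (f : 'rV[R]_d -> R) : continuous f ->
  measurable_fun (setT : set (Rd R d)) f.
Proof.
move=> /continuousP cf; apply: (measurability _ (measurable_realfun.RGenOpens.measurableE R)).
move=> _ [_ [a [b ->]] <-]; rewrite setTI; apply: sub_sigma_algebra.
exact/cf/interval_open.
Qed.

Lemma meas_coord k : measurable_fun (setT : set (Rd R d)) (fun y : 'rV[R]_d => y ord0 k).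
Proof. by apply: meas_cont; exact: coord_continuous. Qed.

Lemma meas_coordB (c : 'rV[R]_d) k :
  measurable_fun (setT : set (Rd R d)) (fun y : 'rV[R]_d => (y - c) ord0 k).
Proof.
have -> : (fun y : 'rV[R]_d => (y - c) ord0 k) = (fun y => y ord0 k - c ord0 k).
  by apply: funext => y; rewrite !mxE.
by apply: measurable_realfun.measurable_funB; [exact: meas_coord | exact: measurable_cst].
Qed.

Lemma meas_enorm (c : 'rV[R]_d) :
  measurable_fun (setT : set (Rd R d)) (fun y : 'rV[R]_d => enorm (y - c)).
Proof.
rewrite /enorm; apply: measurableT_comp.
  by apply: continuous_measurable_fun; exact: sqrt_continuous.
apply: measurable_sum => k; apply: measurable_realfun.measurable_funX; exact: meas_coordB.
Qed.

Lemma meas_ball (c : 'rV[R]_d) (r : R) :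
  measurable (linf_ball c r : set (Rd R d)).
Proof.
have -> : (linf_ball c r : set (Rd R d)) =
  \bigcap_(k in [set: 'I_d]) (setT `&` (fun y : Rd R d => `|(y - c) ord0 k|) @^-1` `]-oo, r]).
  apply/seteqP; split => y /=.
    move=> h k _; split => //=; rewrite in_itv /= !mxE; exact: (h k).
  move=> h k; have [_ /=] := h k I; by rewrite in_itv /= !mxE.
apply: fin_bigcap_measurable; first exact: finite_finset.
move=> k _.
apply: (measurableT_comp (@normr_measurable R setT) (meas_coordB c k)) => //.
Qed.

Variable P : probability (Rd R d) R.

Lemma bnd_int (h : Rd R d -> R) (M : R) : measurable_fun setT h ->
  (forall y, `|h y| <= M) -> P.-integrable setT (EFin \o h).
Proof.
move=> mh hM.
apply: (@le_integrable _ _ _ P setT measurableT (EFin \o h) (EFin \o cst M)).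
- exact/measurable_EFinP.
- move=> y _ /=; rewrite lee_fin; apply: (le_trans (hM y)); exact: ler_norm.
- exact: finite_measure_integrable_cst.
Qed.

Lemma dom_int (h f : Rd R d -> R) (M : R) : measurable_fun setT h ->
  P.-integrable setT (EFin \o f) -> 0 <= M ->
  (forall y, `|h y| <= M * f y) -> P.-integrable setT (EFin \o h).
Proof.
move=> mh fi M0 hM.
apply: (@le_integrable _ _ _ P setT measurableT (EFin \o h) (fun y => (M%:E * (EFin \o f) y)%E)).
- exact/measurable_EFinP.
- move=> y _ /=; rewrite lee_fin; apply: (le_trans (hM y)); exact: ler_norm.
- exact: integrableZl.
Qed.

Lemma Rint_sum (I : Type) (s : seq I) (h : I -> Rd R d -> R) :
  (forall i, P.-integrable setT (EFin \o h i)) ->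
  \sum_(i <- s) Rintegral P setT (h i) = Rintegral P setT (fun y => \sum_(i <- s) h i y)
  /\ P.-integrable setT (EFin \o (fun y => \sum_(i <- s) h i y)).
Proof.
move=> hi; elim: s => [|i s [IH1 IH2]].
  have -> : (fun y => \sum_(i <- [::]) h i y) = cst 0.
    by apply: funext => y; rewrite big_nil.
  rewrite big_nil; split; first by rewrite Rintegral_cst // mul0r.
  exact: finite_measure_integrable_cst.
have -> : (fun y => \sum_(j <- i :: s) h j y) = (fun y => h i y + \sum_(j <- s) h j y).
  by apply: funext => y; rewrite big_cons.
rewrite big_cons.
split.
  by rewrite RintegralD // IH1.
have -> : (EFin \o (fun y => h i y + \sum_(j <- s) h j y)) = (EFin \o h i) \+ (EFin \o (fun y => \sum_(j <- s) h j y)).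
  by apply: funext => y.
exact: integrableD.
Qed.

End M.
Arguments meas_cont {R d}. Arguments meas_coord {R d}. Arguments meas_coordB {R d}.
Arguments meas_enorm {R d}. Arguments meas_ball {R d}. Arguments bnd_int {R d P}.
Arguments dom_int {R d P}. Arguments Rint_sum {R d P}.

Lemma contE (R : realType) d (E : 'rV[R]_d -> 'rV[R]_d -> R) x :
  continuous (fun p : 'rV[R]_d * 'rV[R]_d => E p.1 p.2) -> continuous (E x).
Proof.
move=> cE y.
apply: (@continuous2_cvg _ _ _ _ (nbhs y) _ (fun _ => x) id E x y (cE (x,y))).
  exact: cvg_cst.
exact: cvg_id.
Qed.

Arguments contE {R d E}.
Section M2.
Variables (R : realType) (d : nat) (P : probability (Rd R d) R).

Lemma intD (h1 h2 : Rd R d -> R) : P.-integrable setT (EFin \o h1) ->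
  P.-integrable setT (EFin \o h2) -> P.-integrable setT (EFin \o (fun y => h1 y + h2 y)).
Proof.
move=> i1 i2.
have -> : (EFin \o (fun y => h1 y + h2 y)) = (EFin \o h1) \+ (EFin \o h2).
  by apply: funext => y.
exact: integrableD.
Qed.

Lemma intZ (h : Rd R d -> R) (c : R) : P.-integrable setT (EFin \o h) ->
  P.-integrable setT (EFin \o (fun y => c * h y)).
Proof.
move=> i1.
have -> : (EFin \o (fun y => c * h y)) = (fun y => (c%:E * (EFin \o h) y)%E).
  by apply: funext => y.
exact: integrableZl.
Qed.
End M2.
Arguments intD {R d P}. Arguments intZ {R d P}.

Theorem proposition3p2 (R : realType) (d : nat)
    (E : 'rV[R]_d -> 'rV[R]_d -> R)
    (CEl CEu LE c1 c2 Einf eta nu R0 : R)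
    (ybar : 'rV[R]_d -> 'rV[R]_d) (xstar : 'rV[R]_d)
    (lam sig alpha beta : R)
    (rhoY : R -> probability (Rd R d) R)
    (q r : R) :
  (* continuity of E *)
  continuous (fun p : 'rV[R]_d * 'rV[R]_d => E p.1 p.2) ->
  (* (i) *)
  (forall x y, CEl <= E x y <= CEu) ->
  (* (ii) *)
  (forall x1 x2 y1 y2, `|E x1 y1 - E x2 y2|
     <= LE * (1 + enorm x1 + enorm x2 + enorm y1 + enorm y2)
           * (enorm (x1 - x2) + enorm (y1 - y2))) ->
  (* (iii): ybar x is the unique argmax of E(x, .) *)
  (forall x y, E x y <= E x (ybar x)) ->
  (forall x y, E x y = E x (ybar x) -> y = ybar x) ->
  (* x* = argmin of Ebar(x) = E(x, ybar x) (unique), y* = ybar x* *)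
  (forall x, E xstar (ybar xstar) <= E x (ybar x)) ->
  (forall x, E x (ybar x) = E xstar (ybar xstar) -> x = xstar) ->
  (forall x1 x2, enorm (ybar x1 - ybar x2) <= c1 * enorm (x1 - x2)) ->
  (forall x, enorm (ybar x) <= c2) ->
  (* (iv) *)
  0 < Einf -> 0 < eta -> 0 < nu -> 0 < R0 ->
  (forall x y, linf_ball (ybar x) R0 y ->
     eta * enorm (y - ybar x) <= (`|E x y - E x (ybar x)|) `^ nu) ->
  (forall x y, ~ linf_ball (ybar x) R0 y ->
     Einf < E x (ybar x) - E x y) ->
  (* (v) *)
  (forall q', 0 < q' -> exists r', 0 < r' <= R0 /\
     forall x y, linf_ball (ybar x) r' y -> `|E x y - E x (ybar x)| <= q') ->
  (* parameters of (MF) *)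
  0 < lam -> 0 < sig -> 0 < alpha -> 0 < beta ->
  (* rhoY t : law of Ybar_t, finite fourth moments on bounded time intervals *)
  (forall T, 0 < T -> exists M : R, forall t, 0 <= t <= T ->
     (\int[rhoY t]_y ((enorm (y : 'rV[R]_d)) ^+ 4)%:E <= M%:E)%E) ->
  (* 0 < q <= Einf/2 *)
  0 < q -> q <= Einf / 2 ->
  (* r = max { s in (0, R0] : sup_x E_s(x) <= q } *)
  0 < r <= R0 -> supEr E ybar r <= q ->
  (forall s, 0 < s <= R0 -> supEr E ybar s <= q -> s <= r) ->
  forall (t : R) (x : 'rV[R]_d), 0 < t ->
  (0 < rhoY t (linf_ball (ybar x) r : set (Rd R d)))%E ->
  ((enorm (ybar x - Ybeta E beta (rhoY t) x))%:E
   <= ((2 * q) `^ nu / eta)%:E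
      + (expR (- (beta * q)) / fine (rhoY t (linf_ball (ybar x) r : set (Rd R d))))%:E
        * \int[rhoY t]_y (enorm ((y : 'rV[R]_d) - ybar x))%:E)%E.
Proof.
move=> cE Ebnd _ Emax _ _ _ _ _ Einf0 eta0 nu0 R00 ivA ivB _ _ _ _ beta0 _ q0 qE
  /andP[r0 rR0] supr _ t x t0 PB0.
set P := rhoY t.
set yb := ybar x.
pose Et := E x yb.
pose f := fun y : 'rV[R]_d => enorm (y - yb).
pose w := fun y : 'rV[R]_d => expR (beta * E x y).
have mB : measurable (linf_ball yb r : set (Rd R d)) := meas_ball yb r.
have mf : measurable_fun (setT : set (Rd R d)) f := meas_enorm yb.
have mE : measurable_fun (setT : set (Rd R d)) (E x) := meas_cont _ (contE x cE).
have mw : measurable_fun (setT : set (Rd R d)) w.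
  apply: measurableT_comp; first by apply: continuous_measurable_fun; exact: continuous_expR.
  exact: (measurable_funM (measurable_cst beta) mE).
have f0 : forall y, 0 <= f y := fun y => enorm_ge0 _.
pose M := expR (beta * CEu).
have w0 : forall y, 0 < w y := fun y => expR_gt0 _.
have wM : forall y, w y <= M.
  by move=> y; rewrite /w /M ler_expR ler_pM2l //; case/andP: (Ebnd x y).
have iw : P.-integrable setT (EFin \o w).
  by apply: (bnd_int _ M) => // y; rewrite ger0_norm ?wM // ltW.
pose PB := fine (P (linf_ball yb r)).
have PBpos : 0 < PB.
  apply: fine_gt0; rewrite PB0 /=.
  by rewrite (le_lt_trans (probability_le1 _ mB)) ?ltry.
have bndE : forall z y', `|E z y' - E z (ybar z)| <= CEu - CEl.
  move=> z y'; case/andP: (Ebnd z y') => h1 h2; case/andP: (Ebnd z (ybar z)) => h3 h4.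
  rewrite ler_norml; apply/andP; split; lra.
have inB : forall y, linf_ball yb r y -> Et - q <= E x y.
  move=> y By.
  have h1 : `|E x y - Et| <= Er E ybar r x.
    apply: ub_le_sup; last by exists y.
    by exists (CEu - CEl) => _ [z _ <-]; apply: bndE.
  have h2 : Er E ybar r x <= supEr E ybar r.
    apply: ub_le_sup; last by exists x.
    exists (CEu - CEl) => _ [z _ <-]; apply: ge_sup.
      exists `|E z (ybar z) - E z (ybar z)|; exists (ybar z) => //.
      by move=> k; rewrite subrr normr0 ltW.
    by move=> _ [y' _ <-]; apply: bndE.
  have := le_trans h1 (le_trans h2 supr); rewrite ler_norml => /andP[h _]; lra.
pose rt := (2 * q) `^ nu / eta.
have rt0 : 0 <= rt by rewrite /rt divr_ge0 ?powR_ge0 // ltW.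
have outc : forall y, rt < f y -> E x y < Et - 2 * q.
  move=> y ry; rewrite ltNge; apply/negP => hE.
  have hd : Et - E x y <= 2 * q by lra.
  have inR0 : linf_ball yb R0 y.
    by apply: contrapT => nb; have := ivB x y nb; rewrite -/yb -/Et => h; lra.
  have := ivA x y inR0; rewrite -/yb -/Et => h.
  have h3 : `|E x y - Et| `^ nu <= (2 * q) `^ nu.
    have hEm : E x y <= Et := Emax x y.
    apply: ge0_ler_powR; [exact: ltW | by rewrite nnegrE | by rewrite nnegrE; lra | ].
    rewrite distrC ger0_norm; lra.
  have h4 : eta * f y <= (2 * q) `^ nu := le_trans h h3.
  move: ry; rewrite /rt ltr_pdivrMr // => ry; lra.
pose e1 := expR (beta * (Et - q)).
pose e2 := expR (beta * (Et - 2 * q)).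
have e1pos : 0 < e1 := expR_gt0 _.
have e2e1 : e2 = expR (- (beta * q)) * e1.
  by rewrite /e2 /e1 -expRD; congr expR; lra.
have ptw : forall y, f y * w y <= rt * w y + e2 * f y.
  move=> y; have [fr|rf] := leP (f y) rt.
    have h1 : f y * w y <= rt * w y by rewrite ler_pM2r.
    have h2 : 0 <= e2 * f y by rewrite mulr_ge0 // ltW // expR_gt0.
    lra.
  have hE := outc y rf.
  have wl : w y <= e2 by rewrite /w /e2 ler_expR ler_pM2l // ltW.
  have h1 : f y * w y <= e2 * f y by rewrite mulrC ler_wpM2r.
  have h2 : 0 <= rt * w y by rewrite mulr_ge0 // ltW.
  lra.
have fint0 : (0 <= \int[P]_y (f y)%:E)%E by apply: integral_ge0 => y _; rewrite lee_fin.
have [finf|finf] := eqVneq (\int[P]_y (f y)%:E)%E +oo%E.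
  rewrite finf mulry gtr0_sg ?mul1e ?addey //.
  - exact: leey.
  - by rewrite divr_gt0 // expR_gt0.
have ifin : (\int[P]_y (f y)%:E)%E \is a fin_num.
  by rewrite ge0_fin_numE // lt_neqAle finf leey.
have fi : P.-integrable setT (EFin \o f).
  apply/integrableP; split; first exact/measurable_EFinP.
  under eq_integral do rewrite /= ger0_norm ?f0 //.
  by rewrite -ge0_fin_numE.
have -> : (\int[P]_y (f y)%:E)%E = (Rintegral P setT f)%:E by rewrite /Rintegral fineK.
rewrite -EFinM -EFinD lee_fin.
pose Z := Rintegral P setT w.
pose If := Rintegral P setT f.
have If0 : 0 <= If by apply: Rintegral_ge0 => y _; exact: f0.
have ZB : e1 * PB <= Z.
  have iB : P.-integrable setT (EFin \o (\1_(linf_ball yb r : set (Rd R d)) : Rd R d -> R)).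
    exact: integrable_indic.
  have -> : PB = Rintegral P setT (\1_(linf_ball yb r : set (Rd R d)) : Rd R d -> R).
    by rewrite /Rintegral integral_indic // setIT.
  rewrite -RintegralZl //; apply: le_Rintegral => //; first exact: intZ.
  move=> y _; case: (boolP (y \in (linf_ball yb r : set (Rd R d)))).
    move=> /set_mem yB; rewrite mulr1 /e1 /w ler_expR ler_pM2l //; exact: inB.
  by move=> _; rewrite /= mulr0; exact: (ltW (w0 y)).
have Zpos : 0 < Z by apply: (lt_le_trans _ ZB); rewrite mulr_gt0.
have ifw : P.-integrable setT (EFin \o (fun y => f y * w y)).
  apply: (dom_int _ f M) => //.
  - exact: measurable_funM.
  - by rewrite ltW // expR_gt0.
  - move=> y; rewrite normrM !ger0_norm ?f0 ?(ltW (w0 y)) // mulrC ler_wpM2r //.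
pose Fw := Rintegral P setT (fun y => f y * w y).
have FwB : Fw <= rt * Z + e2 * If.
  rewrite -RintegralZl // -RintegralZl // -RintegralD //; try exact: intZ.
  apply: le_Rintegral => //; first by apply: intD; exact: intZ.
set Yv := Ybeta E beta P x.
set v := yb - Yv.
pose g := fun (k : 'I_d) (y : 'rV[R]_d) => (y - yb) ord0 k * w y.
have ig : forall k, P.-integrable setT (EFin \o g k).
  move=> k; apply: (dom_int _ f M) => //.
  - exact: measurable_funM (meas_coordB yb k) mw.
  - by rewrite ltW // expR_gt0.
  - move=> y; rewrite /g normrM (ger0_norm (ltW (w0 y))) mulrC.
    by apply: ler_pM => //; [exact: ltW | exact: coord_le_enorm].
have vk : forall k, v ord0 k = - (Rintegral P setT (g k) / Z).
  move=> k; rewrite /v /Yv /Ybeta !mxE.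
  have -> : Rintegral P setT (fun y : Rd R d => y ord0 k * expR (beta * E x y))
      = Rintegral P setT (g k) + yb ord0 k * Z.
    rewrite -RintegralZl // -RintegralD //; [|exact: ig|exact: intZ].
    by apply: eq_Rintegral => y _; rewrite /g /w !mxE; ring.
  have -> : Rintegral P setT (fun y : Rd R d => expR (beta * E x y)) = Z by [].
  field; exact: lt0r_neq0.
pose en := enorm v.
have en0 : 0 <= en := enorm_ge0 v.
pose h := fun (k : 'I_d) (y : Rd R d) => v ord0 k * g k y.
have ih : forall k, P.-integrable setT (EFin \o h k) by move=> k; exact: intZ.
have [hS1 hS2] := Rint_sum _ (index_enum 'I_d) h ih.
pose S := Rintegral P setT (fun y => \sum_(k <- index_enum 'I_d) h k y).
have hS : \sum_(k < d) v ord0 k * Rintegral P setT (g k) = S.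
  rewrite /S -hS1; apply: eq_bigr => k _; rewrite /h RintegralZl //.
have ZS : Z * en ^+ 2 = - S.
  rewrite /en enorm_sq -hS mulr_sumr -sumrN; apply: eq_bigr => k _.
  rewrite (vk k); field; exact: lt0r_neq0.
have SL : - (en * Fw) <= S.
  rewrite -mulNr -RintegralZl //; apply: le_Rintegral => //; first exact: intZ.
  move=> y _; rewrite /h /g.
  have -> : \sum_(k <- index_enum 'I_d) v ord0 k * ((y - yb) ord0 k * w y)
      = (\sum_(k < d) v ord0 k * (y - yb) ord0 k) * w y.
    by rewrite mulr_suml; apply: eq_bigr => k _; rewrite mulrA.
  rewrite mulrA mulNr; apply: ler_wpM2r; first exact: ltW.
  have := CS v (y - yb); rewrite -/en -/(f y) ler_norml => /andP[+ _].
  by [].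
have PBdef : fine (P (linf_ball yb r)) = PB by [].
have Ifdef : Rintegral P setT f = If by [].
rewrite -/en -/rt PBdef Ifdef.
set a := expR (- (beta * q)).
have a0 : 0 < a := expR_gt0 _.
have aIf : 0 <= a / PB * If by rewrite mulr_ge0 // divr_ge0 // ltW.
have [ert|ert] := leP en rt; first lra.
have enp : 0 < en by lra.
have h1 : Z * en ^+ 2 <= en * (rt * Z + e2 * If).
  rewrite ZS; apply: (le_trans _ (ler_wpM2l en0 FwB)); lra.
have h2 : Z * en <= rt * Z + e2 * If.
  by move: h1; rewrite expr2 mulrA (mulrC Z) -mulrA ler_pM2l // mulrC.
have h3 : (en - rt) * Z <= a * e1 * If.
  rewrite -e2e1 mulrBl (mulrC en); lra.
have h4 : (en - rt) * (e1 * PB) <= (en - rt) * Z by rewrite ler_pM2l // subr_gt0.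
have h5 : (en - rt) * PB <= a * If.
  have : e1 * ((en - rt) * PB) <= e1 * (a * If) by lra.
  by rewrite ler_pM2l.
have : en - rt <= a / PB * If.
  by rewrite mulrAC ler_pdivlMr.
lra.
Qed.
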